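(* Let the alphabet be countable, let $\mu:\mathcal S\to\mathbb R$ be a probability on sentences and $\mu^*:\mathcal B\to\mathbb R$ a probability measure on the Borel $\sigma$-algebra of interpretations, related by $\mu^*(\mathrm{Mod}(\varphi))=\mu(\varphi)$ for all $\varphi\in\mathcal S$. Then $\mu^*(\mathcal I\setminus\widehat{\mathcal I})=0$ if and only if $\mu$ is Gaifman.
   Context: Setting: higher-order logic (Church's simple theory of types, without a description operator), with Henkin semantics: an interpretation $I$ consists of domains $D_\alpha$ ($D_o=\{\mathsf T,\mathsf F\}$, $D_{\alpha\to\beta}$ a set of functions) and a valuation of constants (equality denoting identity) such that every term has a denotation; $V(t,I)$ is the denotation of a closed term $t$. An alphabet is countable if its set of constants is countable. Sentences are closed terms of type $o$, $\mathcal S$ the set of sentences; a sentence is valid if true in every interpretation. $\mathcal I$ is the set of interpretations, $\mathrm{Mod}(\varphi)=\{I\in\mathcal I:\varphi\text{ valid in }I\}$, and $\mathcal B$ is the Borel $\sigma$-algebra of the topology on $\mathcal I$ with basis $\{\mathrm{Mod}(\varphi)\}$ (equal, for countable alphabet, to the $\sigma$-algebra generated by these sets). $I$ is separating if for every pair $r,s$ of closed terms of the same function type $\alpha\to\beta$ with $V(r,I)\neq V(s,I)$ there is a closed term $t$ of type $\alpha$ (over the alphabet) with $V((r\,t),I)\neq V((s\,t),I)$; $\widehat{\mathcal I}$ is the set of separating interpretations (it is $\mathcal B$-measurable). A probability on sentences is a non-negative $\mu:\mathcal S\to\mathbb R$ with $\mu(\varphi)=1$ for valid $\varphi$ and $\mu(\varphi\vee\psi)=\mu(\varphi)+\mu(\psi)$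 whenever $\neg(\varphi\wedge\psi)$ is valid. $\mu$ is Gaifman if for every pair $r,s$ of closed terms of the same function type $\alpha\to\beta$, $\mu(r=s)=\inf_{\{t_1,\dots,t_n\}}\mu(\bigwedge_{i=1}^n((r\,t_i)=(s\,t_i)))$ over all finite sets of closed terms of type $\alpha$. *)

(* Defs.v *)
From HB Require Import structures.
From mathcomp Require Import all_boot all_order all_algebra.
From mathcomp Require Import boolp classical_sets reals ereal.
From mathcomp Require Import measure probability.
Set Implicit Arguments. Unset Strict Implicit. Unset Printing Implicit Defensive.
Import Order.TTheory GRing.Theory Num.Theory.
Local Open Scope classical_set_scope.

Inductive ty : Type := To | Ti | Tarr (a b : ty).

Inductive logc : ty -> Type :=
| LNot : logc (Tarr To To)
| LOr  : logc (Tarr To (Tarr To To))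
| LAnd : logc (Tarr To (Tarr To To))
| LForall (a : ty) : logc (Tarr (Tarr a To) To)
| LEq (a : ty) : logc (Tarr a (Tarr a To)).

Inductive var : list ty -> ty -> Type :=
| Vz (G : list ty) (a : ty) : var (a :: G) a
| Vs (G : list ty) (a b : ty) : var G a -> var (b :: G) a.

Section Syntax.
(* The alphabet: a type C of (non-logical) constants with their types. *)
Variables (C : Type) (tyC : C -> ty).

Inductive term : list ty -> ty -> Type :=
| Var (G : list ty) (a : ty) : var G a -> term G a
| Cst (G : list ty) (c : C) : term G (tyC c)
| Log (G : list ty) (a : ty) : logc a -> term G a
| App (G : list ty) (a b : ty) : term G (Tarr a b) -> term G a -> term G b
| Lam (G : list ty) (a b : ty) : term (a :: G) b -> term G (Tarr a b).

Definition cterm (a : ty) := term [::] a.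
Definition sentence := cterm To.

Definition eqT (a : ty) (r s : cterm a) : sentence :=
  App (App (Log [::] (LEq a)) r) s.
Definition negT (p : sentence) : sentence := App (Log [::] LNot) p.
Definition orT (p q : sentence) : sentence := App (App (Log [::] LOr) p) q.
Definition andT (p q : sentence) : sentence := App (App (Log [::] LAnd) p) q.
(* a valid sentence used as the empty conjunction: (\x:o.x) = (\x:o.x) *)
Definition idO : cterm (Tarr To To) := Lam (Var (Vz [::] To)).
Definition topT : sentence := eqT idO idO.
Fixpoint bigAnd (l : seq sentence) : sentence :=
  match l with
  | [::] => topT
  | [:: p] => p
  | p :: l' => andT p (bigAnd l')
  end.
End Syntax.

Fixpoint env (D : ty -> Type) (G : list ty) : Type :=
  match G with
  | [::] => unit
  | a :: G' => (D a * env D G')%type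
  end.

Fixpoint lookup (D : ty -> Type) (G : list ty) (a : ty) (v : var G a) :
  env D G -> D a :=
  match v in var G a return env D G -> D a with
  | Vz _ _ => fun e => e.1
  | Vs _ _ _ v' => fun e => lookup v' e.2
  end.

(* Henkin interpretations, presented as extensional applicative        *)
(* structures: D (Tarr a b) is identified, through the injective map    *)
(* [app], with a set of functions D a -> D b; D o is identified with     *)
(* {T,F} through the bijection [truth]; [den] is the (total)            *)
(* denotation function of all terms under all assignments.              *)
Record interp (C : Type) (tyC : C -> ty) := Interp {
  D : ty -> Type;
  app : forall a b, D (Tarr a b) -> D a -> D b;
  app_ext : forall a b (f g : D (Tarr a b)),
      (forall x, app f x = app g x) -> f = g;
  truth : D To -> bool;
  truth_bij : bijective truth;
  ind_inh : D Ti;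
  cval : forall c : C, D (tyC c);
  den : forall G a, term tyC G a -> env D G -> D a;
  den_var : forall G a (v : var G a) e, den (Var tyC v) e = lookup v e;
  den_cst : forall G c (e : env D G), den (@Cst _ tyC G c) e = cval c;
  den_app : forall G a b (t : term tyC G (Tarr a b)) (u : term tyC G a) e,
      den (App t u) e = app (den t e) (den u e);
  den_lam : forall G a b (t : term tyC (a :: G) b) e x,
      app (den (Lam t) e) x = den t (x, e);
  den_not : forall G (e : env D G) x,
      truth (app (den (@Log _ tyC G _ LNot) e) x) = ~~ truth x;
  den_or : forall G (e : env D G) x y,
      truth (app (app (den (@Log _ tyC G _ LOr) e) x) y) = truth x || truth y;
  den_and : forall G (e : env D G) x y,
      truth (app (app (den (@Log _ tyC G _ LAnd) e) x) y) = truth x && truth y;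
  den_forall : forall G (e : env D G) a f,
      truth (app (den (@Log _ tyC G _ (LForall a)) e) f) <-> (forall x, truth (app f x));
  den_eq : forall G (e : env D G) a (x y : D a),
      truth (app (app (den (@Log _ tyC G _ (LEq a)) e) x) y) <-> x = y
}.

Arguments D {C tyC} i _.
Arguments app {C tyC} i {a b} _ _.
Arguments truth {C tyC} i _.
Arguments den {C tyC} i {G a} _ _.

Section Semantics.
Variables (C : Type) (tyC : C -> ty).

Definition V (I : interp tyC) (a : ty) (t : cterm tyC a) : D I a := den I t tt.

Definition true_in (I : interp tyC) (phi : sentence tyC) : Prop :=
  truth I (V I phi).

Definition valid (phi : sentence tyC) : Prop := forall I : interp tyC, true_in I phi.

Definition Mod (phi : sentence tyC) : set (interp tyC) := [set I | true_in I phi].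

Definition separating (I : interp tyC) : Prop :=
  forall a b (r s : cterm tyC (Tarr a b)), V I r <> V I s ->
    exists t : cterm tyC a, V I (App r t) <> V I (App s t).

Definition separatingSet : set (interp tyC) := [set I | separating I].

Variable R : realType.

Definition prob_on_sentences (mu : sentence tyC -> R) : Prop :=
  [/\ forall phi, (0 <= mu phi)%R,
      forall phi, valid phi -> mu phi = 1%R &
      forall phi psi, valid (negT (andT phi psi)) ->
        mu (orT phi psi) = (mu phi + mu psi)%R].

Definition Gaifman (mu : sentence tyC -> R) : Prop :=
  forall a b (r s : cterm tyC (Tarr a b)),
    mu (eqT r s) =
    inf [set x : R | exists ts : seq (cterm tyC a),
           x = mu (bigAnd [seq eqT (App r t) (App s t) | t <- ts])].
End Semantics.

(* The standard (full) model, used only to show that interp is inhabited *)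
Fixpoint full (a : ty) : Type :=
  match a with
  | To => bool
  | Ti => unit
  | Tarr a b => full a -> full b
  end.

Fixpoint dflt (a : ty) : full a :=
  match a with
  | To => false
  | Ti => tt
  | Tarr a b => fun _ => dflt b
  end.

Definition logv (a : ty) (l : logc a) : full a :=
  match l in logc a return full a with
  | LNot => negb
  | LOr => orb
  | LAnd => andb
  | LForall a => fun f => `[< forall x, f x >]
  | LEq a => fun x y => `[< x = y >]
  end.

Section Std.
Variables (C : Type) (tyC : C -> ty).
Fixpoint den_std (G : list ty) (a : ty) (t : term tyC G a) : env full G -> full a :=
  match t in term _ G a return env full G -> full a with
  | Var _ _ v => fun e => lookup v e
  | Cst _ c => fun _ => dflt (tyC c)
  | Log _ _ l => fun _ => logv l
  | App _ _ _ t u => fun e => den_std t e (den_std u e)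
  | Lam _ _ _ t => fun e x => den_std t (x, e)
  end.

Definition std_interp : interp tyC.
Proof.
refine (@Interp C tyC full (fun a b f x => f x) _ id _ tt
          (fun c => dflt (tyC c)) den_std _ _ _ _ _ _ _ _ _) => //=.
- by move=> a b f g H; apply: funext.
- by exists id.
- by move=> G e a f; split=> [/asboolP|H]; [|apply/asboolP].
- by move=> G e a x y; split=> [/asboolP|H]; [|apply/asboolP].
Defined.
End Std.

HB.instance Definition _ (C : Type) (tyC : C -> ty) :=
  gen_eqMixin (interp tyC).
HB.instance Definition _ (C : Type) (tyC : C -> ty) :=
  gen_choiceMixin (interp tyC).
HB.instance Definition _ (C : Type) (tyC : C -> ty) :=
  isPointed.Build (interp tyC) (std_interp tyC).

(* The measurable space of interpretations: the sigma-algebra generated by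
   the sets Mod(phi) (= the Borel sigma-algebra, the alphabet being countable). *)
Definition ModSets (C : Type) (tyC : C -> ty) : set (set (interp tyC)) :=
  range (@Mod C tyC).
Definition IMeas (C : Type) (tyC : C -> ty) := g_sigma_algebraType (@ModSets C tyC).

(* Main.v *)
Require Import Defs.
From HB Require Import structures.
From mathcomp Require Import all_boot all_order all_algebra.
From mathcomp Require Import boolp classical_sets reals ereal.
From mathcomp Require Import topology normedtype sequences measure probability.
From Stdlib Require List.
Set Implicit Arguments. Unset Strict Implicit.
Import Order.TTheory GRing.Theory Num.Theory.
Local Open Scope classical_set_scope.

Fixpoint ty2t (a : ty) : GenTree.tree nat :=
  match a with To => GenTree.Leaf 0 | Ti => GenTree.Leaf 1
  | Tarr a b => GenTree.Node 0 [:: ty2t a; ty2t b] end.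
Fixpoint t2ty (t : GenTree.tree nat) : option ty :=
  match t with
  | GenTree.Leaf 0 => Some To
  | GenTree.Leaf _ => Some Ti
  | GenTree.Node _ [:: x; y] =>
      match t2ty x, t2ty y with Some a, Some b => Some (Tarr a b) | _, _ => None end
  | _ => None end.
Lemma ty2tK : pcancel ty2t t2ty.
Proof. by elim=> //= a -> b ->. Qed.
HB.instance Definition _ := Countable.copy ty (pcan_type ty2tK).

Lemma in_In (T : eqType) (x : T) (s : seq T) : x \in s -> List.In x s.
Proof. elim: s => //= y s IH; rewrite in_cons => /orP [/eqP ->|/IH]; tauto. Qed.

Section Enum.
Variables (C : countType) (tyC : C -> ty).

Definition castT G (a b : ty) (t : term tyC G a) : seq (term tyC G b) :=
  match a =P b with ReflectT e => [:: eq_rect a (term tyC G) t b e] | ReflectF _ => [::] end.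
Lemma castT_id G a (t : term tyC G a) : castT a t = [:: t].
Proof. rewrite /castT; case: eqP => // e; by rewrite (eq_irrelevance e erefl). Qed.

Definition castV G (a b : ty) (v : var G a) : seq (var G b) :=
  match a =P b with ReflectT e => [:: eq_rect a (var G) v b e] | ReflectF _ => [::] end.
Lemma castV_id G a (v : var G a) : castV a v = [:: v].
Proof. rewrite /castV; case: eqP => // e; by rewrite (eq_irrelevance e erefl). Qed.

Fixpoint vars (G : list ty) (a : ty) : seq (var G a) :=
  match G with
  | [::] => [::]
  | b :: G' => castV a (Vz G' b) ++ List.map (@Vs G' a b) (vars G' a)
  end.

Lemma vars_complete G a (v : var G a) : List.In v (vars G a).
Proof.
elim: v => [G' b|G' b c v IH] /=; apply/List.in_or_app.
  by left; rewrite castV_id; left.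
by right; apply: List.in_map.
Qed.

Definition logs (a : ty) : seq {x : ty & logc x} :=
  [:: existT _ _ LNot; existT _ _ LOr; existT _ _ LAnd] ++
  (match a with Tarr (Tarr x _) _ => [:: existT _ _ (LForall x)] | _ => [::] end) ++
  (match a with Tarr x _ => [:: existT _ _ (LEq x)] | _ => [::] end).

Definition tys (n : nat) : seq ty := pmap unpickle (iota 0 n).

Definition lams (G : list ty) (a : ty) (f : forall G' b, seq (term tyC G' b)) : seq (term tyC G a) :=
  match a return seq (term tyC G a) with
  | Tarr a1 b1 => List.map (@Lam C tyC G a1 b1) (f (a1 :: G) b1)
  | _ => [::] end.

Fixpoint terms (n : nat) : forall (G : list ty) (a : ty), seq (term tyC G a) :=
  match n with
  | 0 => fun _ _ => [::]
  | n'.+1 => fun G a =>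
     terms n' G a ++
     List.map (@Var C tyC G a) (vars G a) ++
     List.flat_map (fun k => match @unpickle C k with Some c => castT a (Cst tyC G c) | None => [::] end) (iota 0 n') ++
     List.flat_map (fun p => castT a (Log tyC G (projT2 p))) (logs a) ++
     List.flat_map (fun a' => List.flat_map (fun t => List.map (@App C tyC G a' a t) (terms n' G a'))
                 (terms n' G (Tarr a' a))) (tys n') ++
     lams G a (terms n')
  end.

Lemma terms_S n G a : terms n.+1 G a =
     terms n G a ++
     List.map (@Var C tyC G a) (vars G a) ++
     List.flat_map (fun k => match @unpickle C k with Some c => castT a (Cst tyC G c) | None => [::] end) (iota 0 n) ++
     List.flat_map (fun p => castT a (Log tyC G (projT2 p))) (logs a) ++
     List.flat_map (fun a' => List.flat_map (fun t => List.map (@App C tyC G a' a t) (terms n G a'))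
                 (terms n G (Tarr a' a))) (tys n) ++
     lams G a (terms n).
Proof. by []. Qed.

Lemma terms_mono n m G a (t : term tyC G a) : n <= m -> List.In t (terms n G a) -> List.In t (terms m G a).
Proof.
elim: m => [|m IH]; first by rewrite leqn0 => /eqP ->.
rewrite leq_eqVlt => /orP [/eqP -> //|Hnm] Ht.
by apply/List.in_or_app; left; apply: IH.
Qed.

Lemma iota_in k n : k < n -> List.In k (iota 0 n).
Proof.
move=> H; have : k \in iota 0 n by rewrite mem_iota.
exact: in_In.
Qed.

Section Mem.
Variables (n : nat) (G : list ty) (a : ty).
Lemma mem_var v : List.In (Var tyC v) (terms n.+1 G a).
Proof.
rewrite terms_S; apply: List.in_or_app; right; apply: List.in_or_app; left.
exact: (List.in_map (@Var C tyC G a) _ _ (vars_complete v)).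
Qed.
Lemma mem_cst x : List.In x (List.flat_map (fun k => match @unpickle C k with Some c => castT a (Cst tyC G c) | None => [::] end) (iota 0 n)) -> List.In x (terms n.+1 G a).
Proof. move=> H; rewrite terms_S; do 2 (apply: List.in_or_app; right); apply: List.in_or_app; left; exact H. Qed.
Lemma mem_log x : List.In x (List.flat_map (fun p => castT a (Log tyC G (projT2 p))) (logs a)) -> List.In x (terms n.+1 G a).
Proof. move=> H; rewrite terms_S; do 3 (apply: List.in_or_app; right); apply: List.in_or_app; left; exact H. Qed.
Lemma mem_app x : List.In x (List.flat_map (fun a' => List.flat_map (fun t => List.map (@App C tyC G a' a t) (terms n G a'))
                 (terms n G (Tarr a' a))) (tys n)) -> List.In x (terms n.+1 G a).
Proof. move=> H; rewrite terms_S; do 4 (apply: List.in_or_app; right); apply: List.in_or_app; left; exact H. Qed.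
Lemma mem_lam x : List.In x (lams G a (terms n)) -> List.In x (terms n.+1 G a).
Proof. move=> H; rewrite terms_S; do 5 (apply: List.in_or_app; right); exact H. Qed.
End Mem.

Lemma terms_complete G a (t : term tyC G a) : exists n, List.In t (terms n G a).
Proof.
elim: t => {G a}.
- move=> G a v; exists 1; exact: mem_var.
- move=> G c; exists (pickle c).+2; apply: mem_cst.
  apply/List.in_flat_map; exists (pickle c); rewrite pickleK castT_id; split; last by left.
  by apply: iota_in.
- move=> G a l; exists 1; apply: mem_log.
  apply/List.in_flat_map; exists (existT _ _ l); rewrite castT_id; split; last by left.
  case: l => [| | |x|x]; rewrite /logs /=; [tauto|tauto|tauto|by do 3 right; left|]. do 3 right; apply: List.in_or_app; right; by left.
- move=> G a b t [n1 H1] u [n2 H2].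
  exists (maxn (maxn n1 n2) (pickle a).+1).+1; apply: mem_app.
  apply/List.in_flat_map; exists a; split.
    rewrite /tys; apply: in_In.
    rewrite mem_pmap; apply/mapP; exists (pickle a); last by rewrite pickleK.
    by rewrite mem_iota /= leq_max ltnSn orbT.
  apply/List.in_flat_map; exists t; split.
    by apply: terms_mono H1; rewrite !leq_max leqnn.
  apply: List.in_map; apply: terms_mono H2; rewrite !leq_max leqnn orbT //.
- move=> G a b t [n H]; exists n.+1; apply: mem_lam.
  by apply: List.in_map.
Qed.
End Enum.

Section Sem.
Variables (C : countType) (tyC : C -> ty).
Implicit Types I : interp tyC.

Lemma V_app I a b (r : cterm tyC (Tarr a b)) (t : cterm tyC a) :
  V I (App r t) = app I (V I r) (V I t).
Proof. by rewrite /V den_app. Qed.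

Lemma true_eq I a (r s : cterm tyC a) : true_in I (eqT r s) <-> V I r = V I s.
Proof. by rewrite /true_in /eqT /V !den_app; apply: den_eq. Qed.

Lemma true_and I p q : true_in I (andT p q) <-> true_in I p /\ true_in I q.
Proof. rewrite /true_in /andT /V !den_app den_and; split; [by move/andP|by move=> [-> ->]]. Qed.

Lemma true_top I : true_in I (topT tyC).
Proof. by apply/true_eq. Qed.

Lemma true_bigAnd I (T : Type) (f : T -> sentence tyC) (ts : seq T) :
  true_in I (bigAnd [seq f t | t <- ts]) <-> (forall t, List.In t ts -> true_in I (f t)).
Proof.
elim: ts => [|x [|y ts] IH] /=.
- by split=> // _; apply: true_top.
- by split=> [H t [<-|[]]|H]; [|apply: H; left].
- rewrite true_and IH /=; split=> [[H1 H2] t [<-//|Ht]|H]; first by apply: H2.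
  by split=> [|t Ht]; apply: H; tauto.
Qed.
End Sem.

Section Meas.
Variables (C : countType) (tyC : C -> ty).
Local Notation T := (IMeas tyC).

Lemma measMod (phi : sentence tyC) : measurable (Mod phi : set T).
Proof. by apply: sub_sigma_algebra; exists phi. Qed.

Definition eqs a b (r s : cterm tyC (Tarr a b)) (ts : seq (cterm tyC a)) :=
  bigAnd [seq eqT (App r t) (App s t) | t <- ts].

Definition Bn a b (r s : cterm tyC (Tarr a b)) (n : nat) : set T :=
  Mod (eqs r s (terms tyC n [::] a)).

Definition bad a b (r s : cterm tyC (Tarr a b)) : set T :=
  ~` Mod (eqT r s) `&` \bigcap_n Bn r s n.

Lemma measBn a b (r s : cterm tyC (Tarr a b)) n : measurable (Bn r s n).
Proof. exact: measMod. Qed.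

Lemma measBinf a b (r s : cterm tyC (Tarr a b)) : measurable (\bigcap_n Bn r s n).
Proof. by apply: bigcapT_measurable => n; apply: measBn. Qed.

Lemma measbad a b (r s : cterm tyC (Tarr a b)) : measurable (bad r s).
Proof. by apply: measurableI; [apply: measurableC; apply: measMod|apply: measBinf]. Qed.

Lemma BinfE a b (r s : cterm tyC (Tarr a b)) (I : T) :
  (\bigcap_n Bn r s n) I <-> forall t, V I (App r t) = V I (App s t).
Proof.
split.
- move=> H t; have [n Hn] := terms_complete t.
  have := H n Logic.I; rewrite /Bn /Mod /= /eqs true_bigAnd => /(_ t Hn).
  by move/true_eq.
- move=> H n _; rewrite /Bn /Mod /= /eqs true_bigAnd => t _; exact/true_eq.
Qed.

Lemma Bn_noninc a b (r s : cterm tyC (Tarr a b)) : nonincreasing_seq (Bn r s).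
Proof.
move=> n m nm; apply/subsetPset => I; rewrite /Bn /Mod /= /eqs !true_bigAnd => H t Ht.
by apply: H; apply: terms_mono Ht.
Qed.

Lemma ModEq_sub a b (r s : cterm tyC (Tarr a b)) ts : Mod (eqT r s) `<=` Mod (eqs r s ts).
Proof.
move=> I /true_eq H; rewrite /Mod /= /eqs true_bigAnd => t _; apply/true_eq.
by rewrite !V_app H.
Qed.

Lemma Binf_sub a b (r s : cterm tyC (Tarr a b)) ts :
  (\bigcap_n Bn r s n) `<=` (Mod (eqs r s ts) : set T).
Proof.
move=> I /BinfE H; rewrite /Mod /= /eqs true_bigAnd => t _; exact/true_eq.
Qed.

Definition idx := (ty * ty * nat * nat * nat * nat)%type.

Definition bad' (k : nat) : set T :=
  match @unpickle idx k with
  | Some (a, b, n1, i1, n2, i2) =>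
     match List.nth_error (terms tyC n1 [::] (Tarr a b)) i1,
           List.nth_error (terms tyC n2 [::] (Tarr a b)) i2 with
     | Some r, Some s => bad r s
     | _, _ => set0 end
  | None => set0 end.

Lemma measbad' k : measurable (bad' k).
Proof.
rewrite /bad'; case: unpickle => [[[[[[a b] n1] i1] n2] i2]|] //.
case: List.nth_error => [r|] //; case: List.nth_error => [s|] //.
exact: measbad.
Qed.

Lemma bad_nonsep a b (r s : cterm tyC (Tarr a b)) : bad r s `<=` ~` (@separatingSet C tyC).
Proof.
move=> I [Hne /BinfE Heq] Hsep.
have [t Ht] := Hsep _ _ r s (fun E => Hne (proj2 (true_eq I r s) E)).
exact: Ht.
Qed.

Lemma nonsepE : (~` (@separatingSet C tyC) : set T) = \bigcup_k bad' k.
Proof.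
apply/seteqP; split; last first.
  move=> I [k _]; rewrite /bad'; case: unpickle => [[[[[[a b] n1] i1] n2] i2]|] //.
  case: List.nth_error => [r|] //; case: List.nth_error => [s|] //.
  exact: bad_nonsep.
move=> I Hns; apply: contrapT => Hnot; apply: Hns => a b r s Hne.
apply: contrapT => Hnt.
have [n1 H1] := terms_complete r; have [n2 H2] := terms_complete s.
have [i1 E1] := List.In_nth_error _ _ H1; have [i2 E2] := List.In_nth_error _ _ H2.
apply: Hnot; exists (pickle ((a, b, n1, i1, n2, i2) : idx)); first exact: Logic.I.
rewrite /bad' (@pickleK idx) E1 E2; split.
  by move=> /true_eq.
apply/BinfE => t; apply: contrapT => Ht; apply: Hnt; by exists t.
Qed.

Lemma measNonsep : measurable (~` (@separatingSet C tyC) : set T).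
Proof. by rewrite nonsepE; apply: bigcupT_measurable => k; apply: measbad'. Qed.

End Meas.

Section Main.
Variables (C : countType) (tyC : C -> ty) (R : realType)
    (mu : sentence tyC -> R) (Pstar : probability (IMeas tyC) R).
Hypothesis HP : forall phi : sentence tyC, Pstar (Mod phi) = (mu phi)%:E.
Local Notation T := (IMeas tyC).

Lemma mu_ge0 phi : (0 <= mu phi)%R.
Proof. by rewrite -lee_fin -HP measure_ge0. Qed.

Lemma Pfin (A : set T) : measurable A -> Pstar A = (fine (Pstar A))%:E.
Proof.
move=> mA; rewrite fineK // ge0_fin_numE ?measure_ge0 //.
by rewrite (le_lt_trans (probability_le1 _ mA)) ?ltry.
Qed.

Definition EE a b (r s : cterm tyC (Tarr a b)) : set R :=
  [set x : R | exists ts : seq (cterm tyC a),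
           x = mu (bigAnd [seq eqT (App r t) (App s t) | t <- ts])].

Lemma EE_ne a b (r s : cterm tyC (Tarr a b)) : nonempty (EE r s).
Proof. by exists (mu (bigAnd [seq eqT (App r t) (App s t) | t <- [::]])), [::]. Qed.

Lemma EE_lb a b (r s : cterm tyC (Tarr a b)) : lbound (EE r s) (mu (eqT r s)).
Proof.
move=> x [ts ->]; rewrite -lee_fin -!HP; apply: le_measure; rewrite ?inE; try exact: measMod.
exact: ModEq_sub.
Qed.

Lemma Pbad0 a b (r s : cterm tyC (Tarr a b)) :
  mu (eqT r s) = inf (EE r s) -> Pstar (bad r s) = 0%E.
Proof.
move=> Hg.
have p0 : (0 <= Pstar (bad r s))%E by apply: measure_ge0.
have pfin := Pfin (measbad r s).
have disj : bad r s `&` Mod (eqT r s) = set0.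
  by apply/seteqP; split=> // I [[H1 _] H2].
have key : lbound (EE r s) (fine (Pstar (bad r s)) + mu (eqT r s))%R.
  move=> x [ts ->]; rewrite -lee_fin EFinD -pfin -!HP -measureU //;
    try exact: measMod; try exact: measbad.
  apply: le_measure; rewrite ?inE; try exact: measMod.
  - by apply: measurableU; [exact: measbad|exact: measMod].
  - move=> I [[_ H]|H]; first exact: (Binf_sub ts H).
    exact: (ModEq_sub ts H).
have := lb_le_inf (EE_ne r s) key; rewrite -Hg => H.
apply/eqP; rewrite eq_le p0 andbT pfin lee_fin.
by rewrite -(lerD2r (mu (eqT r s))) add0r.
Qed.


Lemma Gaif_of_null a b (r s : cterm tyC (Tarr a b)) :
  Pstar (~` (@separatingSet C tyC)) = 0%E -> mu (eqT r s) = inf (EE r s).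
Proof.
move=> Hnull.
have bad0 : Pstar (bad r s) = 0%E.
  apply/eqP; rewrite eq_le measure_ge0 andbT -Hnull.
  apply: le_measure; rewrite ?inE; [exact: measbad|exact: measNonsep|exact: bad_nonsep].
have BE : \bigcap_n Bn r s n = Mod (eqT r s) `|` bad r s.
  apply/seteqP; split.
    move=> I H; case: (pselect (true_in I (eqT r s))) => h; [by left|by right].
  move=> I [H|[_ H]] // n _; exact: (ModEq_sub (terms tyC n [::] a) H).
have disj : Mod (eqT r s) `&` bad r s = set0.
  by apply/seteqP; split=> // I [H1 [H2 _]].
have PB : Pstar (\bigcap_n Bn r s n) = (mu (eqT r s))%:E.
  rewrite BE (measureU Pstar) //; [|exact: measMod|exact: measbad].
  transitivity (Pstar (Mod (eqT r s)) + 0)%E; [congr (_ + _)%E; exact: bad0|by rewrite adde0 HP].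
have cv : (Pstar \o Bn r s) @ \oo --> Pstar (\bigcap_n Bn r s n).
  apply: nonincreasing_cvg_mu.
  - by rewrite (le_lt_trans (probability_le1 _ (measBn r s 0))) ?ltry.
  - exact: measBn.
  - exact: measBinf.
  - exact: Bn_noninc.
apply/le_anti/andP; split.
  apply: lb_le_inf; [exact: EE_ne|exact: EE_lb].
rewrite -lee_fin -PB -(cvg_lim _ cv) //.
apply: lime_ge; first by apply/cvg_ex; exists (Pstar (\bigcap_n Bn r s n)).
apply: nearW => n /=; rewrite /Bn HP lee_fin.
apply: ge_inf; last by exists (terms tyC n [::] a).
by exists 0%R => x [ts ->]; apply: mu_ge0.
Qed.

End Main.

Unset Implicit Arguments.
Theorem mainTheorem14 (C : countType) (tyC : C -> ty) (R : realType)
    (mu : sentence tyC -> R) (Pstar : probability (IMeas tyC) R) :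
  prob_on_sentences mu ->
  (forall phi : sentence tyC, Pstar (Mod phi) = (mu phi)%:E) ->
  (Pstar (~` (@separatingSet C tyC)) = 0%E <-> Gaifman mu).
Proof.
move=> _ HP; split.
  by move=> Hnull a b r s; apply: (Gaif_of_null HP).
move=> Hg; rewrite (nonsepE tyC).
apply/eqP; rewrite eq_le measure_ge0 andbT.
have mU : measurable (\bigcup_k @bad' C tyC k : set (IMeas tyC)).
  by apply: bigcupT_measurable => k; apply: measbad'.
apply: (le_trans (@measure_sigma_subadditive _ _ _ Pstar _ _ (@measbad' C tyC) mU (@subset_refl _ _))).
rewrite eseries0 // => k _ _; rewrite /bad'.
case: unpickle => [[[[[[a b] n1] i1] n2] i2]|]; last exact: measure0.
case: List.nth_error => [r|]; last exact: measure0.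
case: List.nth_error => [s|]; last exact: measure0.
by apply: (Pbad0 HP); apply: Hg.
Qed.
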